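(* Let $N\geq 4$, $K\geq 2$, $1\leq l\leq K-1$, $K+1\leq r\leq N-1$ be integers, and for $1\leq k\leq N$ let $G_k:\mathbb{R}\to\mathbb{R}$ with $G_k\in L^1(\mathbb{R})$. (a) If $a_k>0$, $b_k\in\mathbb{R}$, $b_k\neq 0$ for $1\leq k\leq l$, then $N_{a,b,k}<\infty$. (b) If $a_k=0$, $b_k\in\mathbb{R}$, $b_k\neq0$ for $l+1\leq k\leq K$, and additionally $xG_k(x)\in L^1(\mathbb{R})$, then $N_{0,b,k}<\infty$ if and only if $\int_{\mathbb{R}}G_k(x)\,dx=0$. (c) If $a_k>0$ and $xG_k(x)\in L^1(\mathbb{R})$ for $K+1\leq k\leq r$, then $M_{a,k}<\infty$ if and only if $\int_{\mathbb{R}}G_k(x)e^{\mp i\sqrt{a_k}x}\,dx=0$ (for both signs). (d) If $a_k=0$ and $x^2G_k(x)\in L^1(\mathbb{R})$ for $r+1\leq k\leq N$, then $M_{0,k}<\infty$ if and only if $\int_{\mathbb{R}}G_k(x)\,dx=0$ and $\int_{\mathbb{R}}xG_k(x)\,dx=0$.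
   Context: Fourier transform: $\widehat{G_k}(p)=\frac{1}{\sqrt{2\pi}}\int_{\mathbb{R}}G_k(x)e^{-ipx}dx$. For constants $a_k\geq0$ and $b_k\in\mathbb{R}$, define $N_{a,b,k}=\max\Big\{\Big\|\frac{\widehat{G_k}(p)}{p^2-a_k-ib_kp}\Big\|_{L^\infty(\mathbb{R})},\Big\|\frac{p^2\widehat{G_k}(p)}{p^2-a_k-ib_kp}\Big\|_{L^\infty(\mathbb{R})}\Big\}$ and $M_{a,k}=\max\Big\{\Big\|\frac{\widehat{G_k}(p)}{p^2-a_k}\Big\|_{L^\infty(\mathbb{R})},\Big\|\frac{p^2\widehat{G_k}(p)}{p^2-a_k}\Big\|_{L^\infty(\mathbb{R})}\Big\}$; $N_{0,b,k}$ and $M_{0,k}$ denote these quantities when $a_k=0$. *)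

(* Defs.v *)
From HB Require Import structures.
From mathcomp Require Import all_boot all_order all_algebra.
From mathcomp Require Import all_classical all_reals all_analysis.
From mathcomp Require Import ess_sup_inf complex.
Set Implicit Arguments. Unset Strict Implicit. Unset Printing Implicit Defensive.
Import Order.TTheory GRing.Theory Num.Theory.
Import numFieldNormedType.Exports.
Local Open Scope classical_set_scope.
Local Open Scope ring_scope.
Local Open Scope complex_scope.

Section defs.
Variable R : realType.
Local Notation mu := (@lebesgue_measure R).

Definition L1 (G : R -> R) : Prop := mu.-integrable setT (fun x => (G x)%:E).

(* complex integral  \int_R G(x) e^{-i p x} dx, written out via e^{-ipx} = cos(px) - i sin(px) *)
Definition cint (G : R -> R) (p : R) : R[i] :=
  Complex (Rintegral mu setT (fun x => G x * cos (p * x)))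
          (- Rintegral mu setT (fun x => G x * sin (p * x))).

Definition fourier (G : R -> R) (p : R) : R[i] :=
  ((Num.sqrt (2 * pi))^-1)%:C * cint G p.

Definition Linf_norm (f : R -> R[i]) : \bar R :=
  ess_sup mu (fun p => (Normc.normc (f p))%:E).

Definition Nab (G : R -> R) (a b : R) : \bar R :=
  maxe (Linf_norm (fun p => fourier G p / ((p ^+ 2 - a)%:C - (b * p) *i)))
       (Linf_norm (fun p => (p ^+ 2)%:C * fourier G p / ((p ^+ 2 - a)%:C - (b * p) *i))).

Definition Ma (G : R -> R) (a : R) : \bar R :=
  maxe (Linf_norm (fun p => fourier G p / (p ^+ 2 - a)%:C))
       (Linf_norm (fun p => (p ^+ 2)%:C * fourier G p / (p ^+ 2 - a)%:C)).

End defs.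

(* Main.v *)
Require Import Defs.
From HB Require Import structures.
From mathcomp Require Import all_boot all_order all_algebra.
From mathcomp Require Import all_classical all_reals all_analysis.
From mathcomp Require Import ess_sup_inf complex.
From mathcomp Require Import ring lra zify measurable_realfun.
Import Order.TTheory GRing.Theory Num.Theory.
Import numFieldNormedType.Exports.
Local Open Scope classical_set_scope.
Local Open Scope ring_scope.
Local Open Scope complex_scope.
Set Implicit Arguments. Unset Strict Implicit.

Section S.
Variable R : realType.
Local Notation mu := (@lebesgue_measure R).
Local Notation normc := (@Normc.normc R).

Lemma Linf_bdd (f : R -> R[i]) M : (forall p, normc (f p) <= M) -> (Linf_norm f < +oo)%E.
Proof.
move=> H; rewrite /Linf_norm.
apply: (le_lt_trans (@ess_sup_ler _ _ _ mu (fun p => normc (f p)) M%:E _)).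
  by move=> t; rewrite lee_fin.
exact: ltry.
Qed.

Lemma Linf_unbdd (f : R -> R[i]) :
  (forall M, exists c d, c < d /\ forall p, c < p < d -> M < normc (f p)) ->
  ~ (Linf_norm f < +oo)%E.
Proof.
move=> H; rewrite /Linf_norm => /(@ess_supr_bounded _ _ _ mu (fun p => normc (f p))).
move=> [M [N [mN N0 sub]]].
have [c [d [cd Hcd]]] := H M.
have sN : `]c, d[%classic `<=` N.
  move=> x /= xin; apply: sub => /= Hle.
  have : M < normc (f x) by apply: Hcd; move: xin; rewrite in_itv.
  by rewrite ltNge Hle.
have := @subset_measure0 _ _ _ mu _ _ (measurable_itv _) mN sN N0.
move=> H0; have E := lebesgue_measure_itv (R:=R) `]c, d[.
rewrite /= lte_fin cd in E.
have : ((d%:E - c%:E) = 0)%E by rewrite -E; exact: H0.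
by move/eqP; rewrite -EFinD eqe subr_eq0 gt_eqF.
Qed.
End S.


Section S.
Variable R : realType.

Lemma mvt_bound (f df : R -> R) (u v L : R) : u <= v ->
  (forall x : R, is_derive x (1:R) f (df x)) -> (forall x, u <= x <= v -> `|df x| <= L) ->
  `|f v - f u| <= L * (v - u).
Proof.
move=> uv fd dL.
have [c cin ->] := MVT_segment uv (fun x _ => fd x)
   (derivable_within_continuous (fun x _ => @ex_derive _ _ _ _ _ _ _ (fd x))).
rewrite normrM (ger0_norm (x := v - u)) ?subr_ge0 //.
apply: ler_wpM2r; first by rewrite subr_ge0.
by apply: dL; move: cin; rewrite in_itv.
Qed.

Lemma lip_bound (f df : R -> R) (L : R) :
  (forall x : R, is_derive x (1:R) f (df x)) -> (forall x, `|df x| <= L) ->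
  forall u v, `|f u - f v| <= L * `|u - v|.
Proof.
move=> fd dL u v; have [uv|vu] := leP u v.
  rewrite distrC (distrC u) (ger0_norm (x := v - u)) ?subr_ge0 //.
  by apply: mvt_bound => // x _.
rewrite (ger0_norm (x := u - v)); last by rewrite subr_ge0 ltW.
by apply: mvt_bound => //; apply: ltW.
Qed.

Lemma cos_lip (u v : R) : `|cos u - cos v| <= `|u - v|.
Proof.
have := @lip_bound (@cos R) (fun x => - sin x) 1 (fun x => is_derive_cos x) _ u v.
by rewrite mul1r; apply => x; rewrite normrN sin_max.
Qed.

Lemma sin_lip (u v : R) : `|sin u - sin v| <= `|u - v|.
Proof.
have := @lip_bound (@sin R) (fun x => cos x) 1 (fun x => is_derive_sin x) _ u v.
by rewrite mul1r; apply => x; rewrite cos_max.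
Qed.

Lemma sin_le (t : R) : `|sin t| <= `|t|.
Proof. by have := sin_lip t 0; rewrite sin0 !subr0. Qed.

Lemma cos1_le (t : R) : `|cos t - 1| <= `|t|.
Proof. by have := cos_lip t 0; rewrite cos0 subr0. Qed.

Lemma loc_bound (f df : R -> R) (t : R) :
  (forall x : R, is_derive x (1:R) f (df x)) ->
  (forall x, `|x| <= `|t| -> `|df x| <= `|t|) -> `|f t - f 0| <= t ^+ 2.
Proof.
move=> fd dL; have [t0|t0] := leP 0 t.
  have := @mvt_bound f df 0 t `|t| t0 fd.
  rewrite subr0 ger0_norm // -expr2; apply => x /andP[x0 xt].
  by rewrite -(ger0_norm t0); apply: dL; rewrite !ger0_norm.
have := @mvt_bound f df t 0 `|t| (ltW t0) fd.
rewrite distrC sub0r ltr0_norm // mulrNN -expr2; apply => x /andP[x0 xt].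
rewrite -(ltr0_norm t0); apply: dL; rewrite (ltr0_norm t0).
have [x0'|x0'] := leP 0 x; first by rewrite ger0_norm //; lra.
by rewrite ltr0_norm //; lra.
Qed.

Lemma cos1_sq (t : R) : `|cos t - 1| <= t ^+ 2.
Proof.
have := @loc_bound (@cos R) (fun x => - sin x) t (fun x => is_derive_cos x) _.
rewrite cos0; apply => x xt; rewrite normrN; exact: le_trans (sin_le x) xt.
Qed.

Lemma sinx_sq (t : R) : `|sin t - t| <= t ^+ 2.
Proof.
have := @loc_bound (fun x => sin x - x) (fun x => cos x - 1) t _ _.
rewrite sin0 subr0 subr0; apply.
  move=> x xt; exact: le_trans (cos1_le x) xt.
Qed.
End S.


Section S.
Variable R : realType.
Local Notation mu := (@lebesgue_measure R).
Definition Int (f : R -> R) := mu.-integrable setT (EFin \o f).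
Local Notation I f := (Rintegral mu setT f).
Implicit Types f g h : R -> R.

Lemma int_meas f : Int f -> measurable_fun setT f.
Proof. by move=> /(measurable_int mu) /measurable_realfun.measurable_EFinP. Qed.

Lemma int_bound f g : Int f -> Int g -> (forall x, `|f x| <= g x) -> `|I f| <= I g.
Proof.
move=> Hf Hg H.
apply: le_trans (le_normr_Rintegral measurableT Hf) _.
apply: le_Rintegral => //; first exact: integrable_norm.
Qed.

Lemma int_dom f g : measurable_fun setT f -> (forall x, `|f x| <= `|g x|) -> Int g -> Int f.
Proof.
move=> mf H Hg; apply: le_integrable Hg => //; first exact/measurable_realfun.measurable_EFinP.
by move=> x _ /=; rewrite lee_fin.
Qed.

Lemma int_norm f : Int f -> Int (fun x => `|f x|).
Proof. exact: integrable_norm. Qed.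

Lemma int_scale c f : Int f -> Int (fun x => c * f x).
Proof.
move=> Hf; have := integrableZl measurableT c Hf.
by apply: eq_integrable => // x _.
Qed.

Lemma int_cont f h : Int f -> continuous h -> (forall x, `|h x| <= 1) ->
  Int (fun x => f x * h x).
Proof.
move=> Hf ch hb; apply: (@int_dom (fun x => f x * h x) f _ _ Hf).
  apply: measurable_funM; first exact: int_meas.
  exact: continuous_measurable_fun.
by move=> x; rewrite normrM -{2}(mulr1 `|f x|) ler_wpM2l.
Qed.

Lemma cont_cos p : continuous (fun x : R => cos (p * x)).
Proof.
move=> x; apply: continuous_comp; last exact: continuous_cos.
by apply: continuousM => //; apply: cvg_cst.
Qed.

Lemma cont_sin p : continuous (fun x : R => sin (p * x)).
Proof.
move=> x; apply: continuous_comp; last exact: continuous_sin.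
by apply: continuousM => //; apply: cvg_cst.
Qed.

Lemma int_sub f g : Int f -> Int g -> Int (fun x => f x - g x).
Proof.
move=> Hf Hg; have := integrableB measurableT Hf Hg.
by apply: eq_integrable => // x _ /=; rewrite EFinB.
Qed.

Lemma diff_bound (f1 f2 g : R -> R) c : Int f1 -> Int f2 -> Int g ->
  (forall x, `|f1 x - f2 x| <= c * `|g x|) -> `|I f1 - I f2| <= c * I (fun x => `|g x|).
Proof.
move=> H1 H2 Hg H.
rewrite -RintegralB // -RintegralZl //; last exact: int_norm.
apply: int_bound => //; first exact: int_sub.
by apply: int_scale; apply: int_norm.
Qed.
End S.


Section F.
Variable R : realType.
Local Notation mu := (@lebesgue_measure R).
Local Notation I f := (Rintegral mu setT f).
Variable G : R -> R.
Hypothesis HG : Int G.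
Definition Cc p := I (fun x => G x * cos (p * x)).
Definition Ss p := I (fun x => G x * sin (p * x)).
Definition A0 := I (fun x => `|G x|).
Definition A1 := I (fun x => `|x * G x|).
Definition A2 := I (fun x => `|x ^+ 2 * G x|).

Lemma intC p : Int (fun x => G x * cos (p * x)).
Proof. by apply: int_cont => //; [exact: cont_cos| move=> x; exact: cos_max]. Qed.
Lemma intS p : Int (fun x => G x * sin (p * x)).
Proof. by apply: int_cont => //; [exact: cont_sin| move=> x; exact: sin_max]. Qed.

Lemma A0_ge0 : 0 <= A0. Proof. by apply: Rintegral_ge0. Qed.
Lemma A1_ge0 : 0 <= A1. Proof. by apply: Rintegral_ge0. Qed.
Lemma A2_ge0 : 0 <= A2. Proof. by apply: Rintegral_ge0. Qed.

Lemma Cc_bd p : `|Cc p| <= A0.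
Proof.
apply: int_bound => //; [exact: intC | exact: int_norm |].
by move=> x; rewrite normrM -{2}(mulr1 `|G x|) ler_wpM2l // cos_max.
Qed.

Lemma Ss_bd p : `|Ss p| <= A0.
Proof.
apply: int_bound => //; [exact: intS | exact: int_norm |].
by move=> x; rewrite normrM -{2}(mulr1 `|G x|) ler_wpM2l // sin_max.
Qed.

Hypothesis HG1 : Int (fun x => x * G x).

Lemma Cc_lip p q : `|Cc p - Cc q| <= `|p - q| * A1.
Proof.
apply: diff_bound => //; [exact: intC | exact: intC |] => x.
rewrite -mulrBr normrM.
apply: le_trans (ler_wpM2l (normr_ge0 _) (cos_lip _ _)) _.
by rewrite -mulrBl !normrM le_eqVlt; apply/orP; left; apply/eqP; ring.
Qed.

Lemma Ss_lip p q : `|Ss p - Ss q| <= `|p - q| * A1.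
Proof.
apply: diff_bound => //; [exact: intS | exact: intS |] => x.
rewrite -mulrBr normrM.
apply: le_trans (ler_wpM2l (normr_ge0 _) (sin_lip _ _)) _.
by rewrite -mulrBl !normrM le_eqVlt; apply/orP; left; apply/eqP; ring.
Qed.

Hypothesis HG2 : Int (fun x => x ^+ 2 * G x).

Lemma Cc_2 p : `|Cc p - I G| <= p ^+ 2 * A2.
Proof.
apply: diff_bound => //; [exact: intC |] => x.
rewrite -{2}(mulr1 (G x)) -mulrBr normrM.
apply: le_trans (ler_wpM2l (normr_ge0 _) (cos1_sq _)) _.
rewrite normrM (ger0_norm (sqr_ge0 x)) le_eqVlt; apply/orP; left; apply/eqP; ring.
Qed.

Lemma Ss_2 p : `|Ss p - p * I (fun x => x * G x)| <= p ^+ 2 * A2.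
Proof.
rewrite -RintegralZl //.
apply: diff_bound => //; [exact: intS | exact: int_scale |] => x.
have -> : G x * sin (p * x) - p * (x * G x) = G x * (sin (p * x) - p * x) by ring.
rewrite normrM.
apply: le_trans (ler_wpM2l (normr_ge0 _) (sinx_sq _)) _.
rewrite normrM (ger0_norm (sqr_ge0 x)) le_eqVlt; apply/orP; left; apply/eqP; ring.
Qed.
End F.


Section C.
Variable R : realType.
Local Notation normc := (@Normc.normc R).
Definition sq (z : R[i]) : R := (complex.Re z) ^+ 2 + (complex.Im z) ^+ 2.

Lemma sq_ge0 z : 0 <= sq z.
Proof. by rewrite /sq addr_ge0 // sqr_ge0. Qed.

Lemma normc_sq z : normc z = Num.sqrt (sq z).
Proof. by case: z. Qed.

Lemma sq_mulC (k : R) z : sq (k%:C * z) = k ^+ 2 * sq z.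
Proof. by case: z => x y; rewrite /sq /=; ring. Qed.

Lemma sq_cplx (x y : R) : sq (Complex x y) = x ^+ 2 + y ^+ 2.
Proof. by []. Qed.

Lemma nc_div_le (w D : R[i]) M : 0 <= M -> sq w <= M ^+ 2 * sq D -> normc (w / D) <= M.
Proof.
move=> M0 H; rewrite Normc.normcM Normc.normcV.
have [->|D0] := eqVneq D 0; first by rewrite Normc.normc0 invr0 mulr0.
have nD : 0 < normc D.
  rewrite lt_def; apply/andP; split; last by rewrite normc_sq sqrtr_ge0.
  by apply/eqP => /Normc.eq0_normc /eqP; rewrite (negbTE D0).
rewrite ler_pdivrMr // !normc_sq.
apply: le_trans (ler_wsqrtr H) _.
by rewrite sqrtrM ?sqr_ge0 // sqrtr_sqr ger0_norm.
Qed.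

Lemma nc_div_ge (w D : R[i]) m t : 0 < t -> 0 <= m -> 0 < sq D ->
  m ^+ 2 * sq D <= t ^+ 2 * sq w -> m <= t * normc (w / D).
Proof.
move=> t0 m0 D0 H; rewrite Normc.normcM Normc.normcV !normc_sq.
have sD : 0 < Num.sqrt (sq D) by rewrite sqrtr_gt0.
rewrite mulrA ler_pdivlMr //.
have := ler_wsqrtr H.
rewrite (sqrtrM _ (sqr_ge0 m)) (sqrtrM _ (sqr_ge0 t)) !sqrtr_sqr !ger0_norm //.
exact: ltW.
Qed.

Lemma bdd_div (w D : R -> R[i]) K : 0 <= K -> (forall p, sq (w p) <= K * sq (D p)) ->
  (Linf_norm (fun p => (w p / D p)%R) < +oo)%E.
Proof.
move=> K0 H; apply: (@Linf_bdd _ _ (1 + K)) => p; apply: nc_div_le.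
  by rewrite addr_ge0.
apply: le_trans (H p) _; apply: ler_wpM2r; first exact: sq_ge0.
by nra.
Qed.

Lemma unbdd_div (w D : R -> R[i]) p0 d m : 0 < d -> 0 < m ->
  (forall t, 0 < t < d -> 0 < sq (D (p0 + t)) /\
      m ^+ 2 * sq (D (p0 + t)) <= t ^+ 2 * sq (w (p0 + t))) ->
  ~ (Linf_norm (fun p => (w p / D p)%R) < +oo)%E.
Proof.
move=> d0 m0 H; apply: Linf_unbdd => M.
set e := Num.min d (m / (`|M| + 1)).
have M1 : 0 < `|M| + 1 by rewrite ltr_wpDl.
have e0 : 0 < e by rewrite lt_min d0 divr_gt0.
exists p0, (p0 + e); split; first by rewrite ltrDl.
move=> p /andP[p0p pe].
have t0 : 0 < p - p0 by rewrite subr_gt0.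
have te : p - p0 < e by rewrite ltrBlDl.
have [td tm] : p - p0 < d /\ p - p0 < m / (`|M| + 1).
  by move: te; rewrite lt_min => /andP[].
have [sD Hs] : 0 < sq (D (p0 + (p - p0))) /\ m ^+ 2 * sq (D (p0 + (p - p0))) <= (p - p0) ^+ 2 * sq (w (p0 + (p - p0))).
  by apply: H; rewrite t0 td.
rewrite addrC subrK in sD Hs.
have := nc_div_ge t0 (ltW m0) sD Hs.
move: tm; rewrite ltr_pdivlMr // => tm hm.
have : `|M| + 1 < normc (w p / D p).
  rewrite -(ltr_pM2l t0); exact: lt_le_trans tm hm.
apply: le_lt_trans; rewrite (le_trans (ler_norm M)) // lerDl //.
Qed.
End C.
Section C2.
Variable R : realType.
Lemma unbdd_div2 (w D : R -> R[i]) p0 d K : 0 < d -> 0 < K ->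
  (forall t, 0 < t < d -> 0 < sq (D (p0 + t)) /\
      K * sq (D (p0 + t)) <= t ^+ 2 * sq (w (p0 + t))) ->
  ~ (Linf_norm (fun p => (w p / D p)%R) < +oo)%E.
Proof.
move=> d0 K0 H; apply: (@unbdd_div _ w D p0 d (Num.min 1 K)) => //.
  by rewrite lt_min ltr01 K0.
move=> t /H [h1 h2]; split => //; apply: le_trans h2.
apply: ler_wpM2r; first exact: sq_ge0.
have m0 : 0 <= Num.min 1 K by rewrite le_min ler01 ltW.
have m1 : Num.min 1 K <= 1 by rewrite ge_min lexx.
have mK : Num.min 1 K <= K by rewrite ge_min lexx orbT.
by nra.
Qed.

Lemma small_t (V A t : R) : 0 <= A -> V != 0 -> 0 < t < Num.min 1 (`|V| / (2 * A + 1)) ->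
  t < 1 /\ 2 * (t * A) <= `|V|.
Proof.
move=> A0 V0 /andP[t0]; rewrite lt_min => /andP[t1 tV]; split => //.
have d0 : 0 < 2 * A + 1 by lra.
move: tV; rewrite ltr_pdivlMr // => h; lra.
Qed.

Lemma min_gt0 (V A : R) : 0 <= A -> V != 0 -> 0 < Num.min 1 (`|V| / (2 * A + 1)).
Proof.
move=> A0 V0; rewrite lt_min ltr01 divr_gt0 ?normr_gt0 //; lra.
Qed.

Lemma sq_le_aux (u x : R) : 0 <= u -> u <= `|x| -> u ^+ 2 <= x ^+ 2.
Proof.
move=> u0 ux; rewrite -(real_normK (num_real x)).
have := normr_ge0 x; nra.
Qed.

Lemma lowX (X V e : R) : `|X - V| <= e -> 2 * e <= `|V| -> V ^+ 2 / 4 <= X ^+ 2.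
Proof.
move=> h1 h2.
have h3 : `|V| / 2 <= `|X|.
  have := ler_distD X V 0; rewrite !subr0 distrC.
  have := ler_normB V X; lra.
have : (`|V| / 2) ^+ 2 <= X ^+ 2.
  apply: sq_le_aux; last exact: h3.
  by rewrite divr_ge0.
by rewrite exprMn real_normK ?num_real // => h; apply: le_trans h; rewrite le_eqVlt; apply/orP; left; apply/eqP; field.
Qed.
End C2.


Section P.
Variable R : realType.
Local Notation mu := (@lebesgue_measure R).
Local Notation I f := (Rintegral mu setT f).
Definition cc : R := (Num.sqrt (2 * pi))^-1.
Lemma cc_gt0 : 0 < cc.
Proof. by rewrite invr_gt0 sqrtr_gt0 mulr_gt0 // pi_gt0. Qed.

Lemma sq_le (x u : R) : `|x| <= u -> x ^+ 2 <= u ^+ 2.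
Proof. by rewrite ler_norml => /andP[h1 h2]; nra. Qed.

Lemma sqF G p : sq (fourier G p) = cc ^+ 2 * ((Cc G p) ^+ 2 + (Ss G p) ^+ 2).
Proof. by rewrite /fourier sq_mulC /cint sq_cplx sqrrN. Qed.

Lemma sqF2 G p : sq ((p ^+ 2)%:C * fourier G p) =
  (p ^+ 2) ^+ 2 * (cc ^+ 2 * ((Cc G p) ^+ 2 + (Ss G p) ^+ 2)).
Proof. by rewrite sq_mulC sqF. Qed.

Lemma sqF_bd G p u : `|Cc G p| <= u -> `|Ss G p| <= u ->
  cc ^+ 2 * ((Cc G p) ^+ 2 + (Ss G p) ^+ 2) <= 2 * cc ^+ 2 * u ^+ 2.
Proof.
move=> /sq_le h1 /sq_le h2.
have := sqr_ge0 cc; nra.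
Qed.

Lemma sqDN (a b p : R) : sq ((p ^+ 2 - a)%:C - (b * p)*i) = (p ^+ 2 - a) ^+ 2 + (b * p) ^+ 2.
Proof. by rewrite /sq /=; ring. Qed.

Lemma sqDM (a p : R) : sq ((p ^+ 2 - a)%:C) = (p ^+ 2 - a) ^+ 2.
Proof. by rewrite /sq /=; ring. Qed.

Lemma polyA1 (a b : R) : 0 < a -> b != 0 ->
  exists2 k, 0 < k & forall p, k <= (p ^+ 2 - a) ^+ 2 + (b * p) ^+ 2.
Proof.
move=> a0 b0; have b2 : 0 < b ^+ 2 by rewrite exprn_even_gt0.
exists (Num.min (a ^+ 2 / 4) (b ^+ 2 * a / 2)).
  rewrite lt_min; apply/andP; split; apply: divr_gt0 => //; [exact: exprn_gt0|exact: mulr_gt0].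
move=> p; have s0 := sqr_ge0 p; have q0 := sqr_ge0 (b * p).
have r0 := sqr_ge0 (p ^+ 2 - a).
have [h|h] := leP (p ^+ 2) (a / 2).
  rewrite ge_min; apply/orP; left.
  have : a / 2 <= a - p ^+ 2 by lra.
  move=> h2; have : (a / 2) ^+ 2 <= (a - p ^+ 2) ^+ 2.
    by apply: sq_le; rewrite ger0_norm //; lra.
  have -> : (p ^+ 2 - a) ^+ 2 = (a - p ^+ 2) ^+ 2 by ring.
  have -> : (a / 2) ^+ 2 = a ^+ 2 / 4 by field.
  lra.
rewrite ge_min; apply/orP; right.
rewrite exprMn.
have : b ^+ 2 * (a / 2) <= b ^+ 2 * p ^+ 2 by rewrite ler_pM2l //; apply: ltW.
have -> : b ^+ 2 * a / 2 = b ^+ 2 * (a / 2) by rewrite mulrA.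
lra.
Qed.

Lemma polyA2 (a b : R) : 0 < a -> b != 0 ->
  exists2 K, 0 <= K & forall p, (p ^+ 2) ^+ 2 <= K * ((p ^+ 2 - a) ^+ 2 + (b * p) ^+ 2).
Proof.
move=> a0 b0; have [k k0 hk] := polyA1 a0 b0.
exists (4 + 4 * a ^+ 2 / k).
  by rewrite addr_ge0 // divr_ge0 // ?mulr_ge0 ?sqr_ge0 // ltW.
move=> p; have s0 := sqr_ge0 p; have q0 := sqr_ge0 (b * p).
have r0 := sqr_ge0 (p ^+ 2 - a); have hp := hk p.
set D := (p ^+ 2 - a) ^+ 2 + (b * p) ^+ 2 in hp *.
have D0 : 0 <= D by rewrite /D addr_ge0.
have t0 : 0 <= 4 * a ^+ 2 / k * D by rewrite mulr_ge0 // divr_ge0 ?mulr_ge0 ?sqr_ge0 // ltW.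
have [h|h] := leP (2 * a) (p ^+ 2).
  have : (p ^+ 2) ^+ 2 <= 4 * (p ^+ 2 - a) ^+ 2.
    have : p ^+ 2 / 2 <= p ^+ 2 - a by lra.
    move=> h2; have := @sq_le (p ^+ 2 / 2) (p ^+ 2 - a).
    rewrite ger0_norm; last by rewrite divr_ge0.
    move=> /(_ h2); have -> : (p ^+ 2 / 2) ^+ 2 = (p ^+ 2) ^+ 2 / 4 by field.
    lra.
  rewrite /D in t0 *; lra.
have h1 : (p ^+ 2) ^+ 2 <= 4 * a ^+ 2.
  have : (p ^+ 2) ^+ 2 <= (2 * a) ^+ 2 by apply: sq_le; rewrite ger0_norm //; apply: ltW.
  have -> : (2 * a) ^+ 2 = 4 * a ^+ 2 by ring.
  done.
have h2 : 4 * a ^+ 2 <= 4 * a ^+ 2 / k * D.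
  have -> : 4 * a ^+ 2 / k * D = 4 * a ^+ 2 * (D / k) by rewrite mulrAC -mulrA.
  rewrite -{1}(mulr1 (4 * a ^+ 2)) ler_wpM2l ?mulr_ge0 ?sqr_ge0 //.
  1-2: by apply: ltW. by rewrite ler_pdivlMr // mul1r.
have : 4 * D >= 0 by rewrite mulr_ge0.
rewrite mulrDl; lra.
Qed.
End P.
Arguments cc {R}.


Section Q.
Variable R : realType.
Local Notation mu := (@lebesgue_measure R).
Local Notation I f := (Rintegral mu setT f).

Lemma le_divk (X k D : R) : 0 <= X -> 0 < k -> k <= D -> X <= X / k * D.
Proof.
move=> X0 k0 kD; rewrite -mulrA -{1}(mulr1 X) ler_wpM2l //.
by rewrite ler_pdivlMl // mulr1.
Qed.

Lemma cst_ge0 (G : R -> R) : 0 <= 2 * cc ^+ 2 * A0 G ^+ 2.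
Proof. apply: mulr_ge0; [apply: mulr_ge0 => //; exact: sqr_ge0 | exact: sqr_ge0]. Qed.

Lemma partA (G : R -> R) a b : Int G -> 0 < a -> b != 0 -> (Nab G a b < +oo)%E.
Proof.
move=> HG a0 b0; rewrite /Nab gt_max; apply/andP; split.
  have [k k0 hk] := polyA1 a0 b0.
  apply: (@bdd_div _ (fourier G) (fun p => (p ^+ 2 - a)%:C - (b * p)*i)
            (2 * cc ^+ 2 * A0 G ^+ 2 / k)) => [|p].
    by rewrite divr_ge0 ?cst_ge0 // ltW.
  rewrite sqF sqDN; apply: le_trans (sqF_bd (Cc_bd HG p) (Ss_bd HG p)) _.
  exact: le_divk (cst_ge0 G) k0 (hk p).
have [K K0 hK] := polyA2 a0 b0.
apply: (@bdd_div _ (fun p => (p ^+ 2)%:C * fourier G p) (fun p => (p ^+ 2 - a)%:C - (b * p)*i)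
          (K * (2 * cc ^+ 2 * A0 G ^+ 2))) => [|p].
  by rewrite mulr_ge0 ?cst_ge0.
rewrite sqF2 sqDN.
set C := 2 * cc ^+ 2 * A0 G ^+ 2.
rewrite (_ : K * C * _ = C * (K * ((p ^+ 2 - a) ^+ 2 + (b * p) ^+ 2))); last by ring.
rewrite [X in X <= _]mulrC.
apply: ler_pM; [|exact: sqr_ge0| |exact: hK].
  apply: mulr_ge0; first exact: sqr_ge0.
  by apply: addr_ge0; exact: sqr_ge0.
exact: sqF_bd (Cc_bd HG p) (Ss_bd HG p).
Qed.
End Q.
Section B.
Variable R : realType.
Local Notation mu := (@lebesgue_measure R).
Local Notation I f := (Rintegral mu setT f).

Lemma Cc0 (G : R -> R) : Cc G 0 = I G.
Proof. by rewrite /Cc; under eq_Rintegral do rewrite mul0r cos0 mulr1. Qed.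

Lemma Ss0 (G : R -> R) : Ss G 0 = 0.
Proof.
rewrite /Ss; under eq_Rintegral do rewrite mul0r sin0 mulr0.
by rewrite Rintegral_cst // mul0r.
Qed.

Lemma partB (G : R -> R) b : Int G -> b != 0 -> Int (fun x => x * G x) ->
  ((Nab G 0 b < +oo)%E <-> I G = 0).
Proof.
move=> HG b0 HG1; have b2 : 0 < b ^+ 2 by rewrite exprn_even_gt0.
have cc2 : 0 < cc ^+ 2 :> R by rewrite exprn_gt0 // cc_gt0.
have A1p := A1_ge0 G.
split; last first.
  move=> IG0; rewrite /Nab gt_max; apply/andP; split.
    apply: (@bdd_div _ (fourier G) (fun p => (p ^+ 2 - 0)%:C - (b * p)*i)
            (2 * cc ^+ 2 * A1 G ^+ 2 / b ^+ 2)) => [|p].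
      apply: divr_ge0; last exact: sqr_ge0. apply: mulr_ge0; [apply: mulr_ge0 => //; exact: ltW | exact: sqr_ge0].
    rewrite sqF sqDN.
    have hX : `|Cc G p| <= `|p| * A1 G.
      by have := Cc_lip HG HG1 p 0; rewrite Cc0 IG0 !subr0.
    have hY : `|Ss G p| <= `|p| * A1 G.
      by have := Ss_lip HG HG1 p 0; rewrite Ss0 !subr0.
    apply: le_trans (sqF_bd hX hY) _.
    rewrite subr0 !exprMn real_normK ?num_real //.
    have := sqr_ge0 (p ^+ 2); have := sqr_ge0 p.
    set P := p ^+ 2; set Q := P ^+ 2; set A := A1 G ^+ 2; set C := cc ^+ 2.
    have : 0 <= A by rewrite /A sqr_ge0.
    move=> A0 P0 Q0.
    rewrite mulrDr.
    have -> : 2 * C * A / b ^+ 2 * (b ^+ 2 * P) = 2 * C * (P * A).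
      by field.
    have : 0 <= 2 * C * A / b ^+ 2 * (P * P).
      apply: mulr_ge0; last by rewrite -expr2.
      by apply: divr_ge0; [apply: mulr_ge0 => //; apply: mulr_ge0 => //; exact: ltW | exact: ltW].
    lra.
  apply: (@bdd_div _ (fun p => (p ^+ 2)%:C * fourier G p) (fun p => (p ^+ 2 - 0)%:C - (b * p)*i)
          (2 * cc ^+ 2 * A0 G ^+ 2)) => [|p]; first exact: cst_ge0.
  rewrite sqF2 sqDN subr0 [X in X <= _]mulrC.
  apply: ler_pM; [|exact: sqr_ge0|exact: sqF_bd (Cc_bd HG p) (Ss_bd HG p)|].
    apply: mulr_ge0; first exact: sqr_ge0.
    by apply: addr_ge0; exact: sqr_ge0.
  by rewrite lerDl sqr_ge0.
move=> H; apply/eqP; apply: contraT => IG0; exfalso; move: H.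
rewrite /Nab gt_max => /andP[H _]; move: H.
apply: (@unbdd_div2 _ (fourier G) (fun p => (p ^+ 2 - 0)%:C - (b * p)*i) 0
   (Num.min 1 (`|I G| / (2 * A1 G + 1))) (cc ^+ 2 * (I G) ^+ 2 / (4 * (1 + b ^+ 2)))).
- exact: min_gt0.
- apply: divr_gt0; first by apply: mulr_gt0 => //; rewrite exprn_even_gt0.
  lra.
move=> t ht; have [t1 tA] := small_t A1p IG0 ht.
have t0 : 0 < t by case/andP: ht.
rewrite add0r sqDN sqF subr0; split.
  by rewrite ltr_pwDr ?sqr_ge0 // exprn_even_gt0 // mulf_neq0 // gt_eqF.
have hX : `|Cc G t - I G| <= t * A1 G.
  have := Cc_lip HG HG1 t 0. rewrite Cc0 subr0. by rewrite (gtr0_norm t0).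
have lX := lowX hX tA.
have hS := sqr_ge0 (Ss G t).
set X := Cc G t in lX hS *; set V := I G in lX *.
have e : (t ^+ 2) ^+ 2 + (b * t) ^+ 2 = t ^+ 2 * (t ^+ 2 + b ^+ 2) by ring.
rewrite e.
have hb : t ^+ 2 + b ^+ 2 <= 1 + b ^+ 2 by have := sqr_ge0 t; nra.
set T := t ^+ 2; have T0 : 0 <= T by rewrite /T sqr_ge0.
set Bq := b ^+ 2 in hb b2 *.
have hK : cc ^+ 2 * V ^+ 2 / (4 * (1 + Bq)) * (T + Bq) <= cc ^+ 2 * (V ^+ 2 / 4).
  have B1 : 0 < 1 + Bq by lra.
  have q : (T + Bq) / (1 + Bq) <= 1 by rewrite ler_pdivrMr // mul1r.
  have -> : cc ^+ 2 * V ^+ 2 / (4 * (1 + Bq)) * (T + Bq) =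
     cc ^+ 2 * (V ^+ 2 / 4) * ((T + Bq) / (1 + Bq)).
    by field; rewrite gt_eqF.
  rewrite -[X in _ <= X](mulr1 (cc ^+ 2 * (V ^+ 2 / 4))) ler_wpM2l //.
  apply: mulr_ge0; [exact: sqr_ge0 | apply: divr_ge0 => //; exact: sqr_ge0].
rewrite mulrCA; apply: ler_wpM2l => //.
apply: le_trans hK _; apply: ler_wpM2l; first exact: ltW.
lra.
Qed.
End B.


Section CC.
Variable R : realType.
Local Notation mu := (@lebesgue_measure R).
Local Notation I f := (Rintegral mu setT f).

Lemma cint0 (G : R -> R) p : cint G p = 0 <-> Cc G p = 0 /\ Ss G p = 0.
Proof.
split; first by case => h1 /eqP; rewrite oppr_eq0 => /eqP h2.
by case => h1 h2; rewrite /cint -/(Cc G p) -/(Ss G p) h1 h2 oppr0.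
Qed.

Lemma polyC1 (X p s A : R) : 0 < s -> 0 <= A -> `|X| <= `|p - s| * A -> `|X| <= `|p + s| * A ->
  s ^+ 2 * X ^+ 2 <= A ^+ 2 * (p ^+ 2 - s ^+ 2) ^+ 2.
Proof.
move=> s0 A0 h1 h2.
have e : (p ^+ 2 - s ^+ 2) ^+ 2 = (p - s) ^+ 2 * (p + s) ^+ 2 by ring.
have := sqr_ge0 X; have := sqr_ge0 A.
have [p0|p0] := leP 0 p.
  have := sq_le h1; rewrite exprMn real_normK ?num_real // => h3.
  have h4 : s ^+ 2 <= (p + s) ^+ 2 by nra.
  rewrite e; nra.
have := sq_le h2; rewrite exprMn real_normK ?num_real // => h3.
have h4 : s ^+ 2 <= (p - s) ^+ 2 by nra.
rewrite e; nra.
Qed.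

Lemma polyC2 (P a Z A0 A1 : R) : 0 < a -> 0 <= P -> 0 <= Z -> Z <= 2 * A0 ^+ 2 ->
  a * Z <= 2 * A1 ^+ 2 * (P - a) ^+ 2 ->
  P ^+ 2 * Z <= (8 * A0 ^+ 2 + 8 * a * A1 ^+ 2) * (P - a) ^+ 2.
Proof.
move=> a0 P0 Z0 hZ haZ.
have E0 := sqr_ge0 (P - a); have B0 := sqr_ge0 A0; have B1 := sqr_ge0 A1.
have [h|h] := leP (2 * a) P.
  have h1 : P ^+ 2 <= 4 * (P - a) ^+ 2 by nra.
  have h2 : P ^+ 2 * Z <= 4 * (P - a) ^+ 2 * (2 * A0 ^+ 2).
    by apply: ler_pM => //; exact: sqr_ge0.
  have : 0 <= 8 * a * A1 ^+ 2 * (P - a) ^+ 2.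
    by apply: mulr_ge0 => //; apply: mulr_ge0 => //; apply: mulr_ge0 => //; apply: ltW.
  nra.
have h1 : P ^+ 2 <= 4 * a ^+ 2 by nra.
have h2 : P ^+ 2 * Z <= 4 * a * (a * Z) by nra.
have h3 : 4 * a * (a * Z) <= 4 * a * (2 * A1 ^+ 2 * (P - a) ^+ 2).
  by rewrite ler_wpM2l // mulr_ge0 // ltW.
have : 0 <= 8 * A0 ^+ 2 * (P - a) ^+ 2 by apply: mulr_ge0 => //; apply: mulr_ge0.
nra.
Qed.
End CC.
Section CC2.
Variable R : realType.
Local Notation mu := (@lebesgue_measure R).
Local Notation I f := (Rintegral mu setT f).

Lemma ratio_le (C V Q Q' : R) : 0 <= C -> 0 <= Q -> Q <= Q' -> 0 < Q' ->
  C * V ^+ 2 / (4 * Q') * Q <= C * (V ^+ 2 / 4).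
Proof.
move=> C0 Q0 QQ Q'0.
have q : Q / Q' <= 1 by rewrite ler_pdivrMr // mul1r.
have -> : C * V ^+ 2 / (4 * Q') * Q = C * (V ^+ 2 / 4) * (Q / Q').
  by field; rewrite gt_eqF.
rewrite -[X in _ <= X](mulr1 (C * (V ^+ 2 / 4))) ler_wpM2l //.
apply: mulr_ge0 => //; apply: divr_ge0 => //; exact: sqr_ge0.
Qed.

Lemma unbM (G : R -> R) a (Z : R -> R) s0 A : 0 < a -> `|s0| = Num.sqrt a -> Z s0 != 0 ->
  0 <= A -> (forall t, `|Z (s0 + t) - Z s0| <= `|t| * A) ->
  (forall p, Z p ^+ 2 <= Cc G p ^+ 2 + Ss G p ^+ 2) ->
  ~ (Linf_norm (fun p => (fourier G p / (p ^+ 2 - a)%:C)%R) < +oo)%E.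
Proof.
move=> a0 hs Z0 A0 hZ hZC.
set s := Num.sqrt a in hs.
have sp : 0 < s by rewrite sqrtr_gt0.
have sa : s0 ^+ 2 = a by rewrite -(real_normK (num_real s0)) hs sqr_sqrtr // ltW.
have cc2 : 0 < cc ^+ 2 :> R by rewrite exprn_gt0 // cc_gt0.
apply: (@unbdd_div2 _ (fourier G) (fun p => (p ^+ 2 - a)%:C) s0
   (Num.min (Num.min 1 (`|Z s0| / (2 * A + 1))) s)
   (cc ^+ 2 * (Z s0) ^+ 2 / (4 * (2 * s + 1) ^+ 2))).
- by rewrite lt_min sp min_gt0.
- apply: divr_gt0; first by apply: mulr_gt0 => //; rewrite exprn_even_gt0.
  by apply: mulr_gt0 => //; rewrite exprn_gt0 //; lra.
move=> t /andP[t0]; rewrite lt_min => /andP[td ts].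
have [t1 tA] : t < 1 /\ 2 * (t * A) <= `|Z s0| by apply: small_t => //; rewrite t0 td.
rewrite sqDM sqF.
have e : ((s0 + t) ^+ 2 - a) ^+ 2 = t ^+ 2 * (2 * s0 + t) ^+ 2 by rewrite -sa; ring.
rewrite e.
have hb : `|2 * s0 + t| <= 2 * s + 1.
  apply: le_trans (ler_normD _ _) _; rewrite normrM hs gtr0_norm // (gtr0_norm t0); lra.
have hb2 : 0 < `|2 * s0 + t|.
  have := lerB_normD (2 * s0) t; rewrite normrM hs (gtr0_norm t0).
  rewrite ger0_norm ?ler0n // => h; lra.
split.
  apply: mulr_gt0; first by rewrite exprn_gt0.
  by rewrite -(real_normK (num_real _)) exprn_gt0.
have hZt : `|Z (s0 + t) - Z s0| <= t * A by have := hZ t; rewrite (gtr0_norm t0).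
have lZ := lowX hZt tA.
have hQ : (2 * s0 + t) ^+ 2 <= (2 * s + 1) ^+ 2 by apply: sq_le.
rewrite mulrCA; apply: ler_wpM2l; first exact: sqr_ge0.
apply: le_trans (ratio_le (Z s0) (ltW cc2) (sqr_ge0 _) hQ _) _.
  by rewrite exprn_gt0 //; lra.
apply: ler_wpM2l; first exact: ltW.
apply: le_trans lZ _; exact: hZC.
Qed.
End CC2.
Section CC3.
Variable R : realType.
Local Notation mu := (@lebesgue_measure R).
Local Notation I f := (Rintegral mu setT f).

Lemma partC (G : R -> R) a : Int G -> 0 < a -> Int (fun x => x * G x) ->
  ((Ma G a < +oo)%E <-> (cint G (Num.sqrt a) = 0 /\ cint G (- Num.sqrt a) = 0)).
Proof.
move=> HG a0 HG1.
set s := Num.sqrt a.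
have sp : 0 < s by rewrite sqrtr_gt0.
have sa : s ^+ 2 = a by rewrite sqr_sqrtr // ltW.
have cc2 : 0 < cc ^+ 2 :> R by rewrite exprn_gt0 // cc_gt0.
have A1p := A1_ge0 G; have A0p := A0_ge0 G.
split.
  rewrite /Ma gt_max => /andP[H _].
  have key : forall s0, `|s0| = s -> Cc G s0 = 0 /\ Ss G s0 = 0.
    move=> s0 hs0; split; apply/eqP; apply: contraT => hZ; exfalso; move: H.
      apply: (@unbM _ G a (Cc G) s0 (A1 G) a0 hs0 hZ A1p) => [t|p].
        have := Cc_lip HG HG1 (s0 + t) s0.
        by have -> : s0 + t - s0 = t by ring.
      by rewrite lerDl sqr_ge0.
    apply: (@unbM _ G a (Ss G) s0 (A1 G) a0 hs0 hZ A1p) => [t|p].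
      have := Ss_lip HG HG1 (s0 + t) s0.
      by have -> : s0 + t - s0 = t by ring.
    by rewrite lerDr sqr_ge0.
  split; apply/cint0; apply: key; first by rewrite ger0_norm // ltW.
  by rewrite normrN ger0_norm // ltW.
move=> [/cint0 [c1 s1] /cint0 [c2 s2]].
have bd : forall p, a * (Cc G p ^+ 2 + Ss G p ^+ 2) <= 2 * A1 G ^+ 2 * (p ^+ 2 - a) ^+ 2.
  move=> p.
  have hX1 : `|Cc G p| <= `|p - s| * A1 G by have := Cc_lip HG HG1 p s; rewrite c1 subr0.
  have hX2 : `|Cc G p| <= `|p + s| * A1 G.
    by have := Cc_lip HG HG1 p (- s); rewrite c2 subr0 opprK.
  have hY1 : `|Ss G p| <= `|p - s| * A1 G by have := Ss_lip HG HG1 p s; rewrite s1 subr0.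
  have hY2 : `|Ss G p| <= `|p + s| * A1 G.
    by have := Ss_lip HG HG1 p (- s); rewrite s2 subr0 opprK.
  have := polyC1 sp A1p hX1 hX2; have := polyC1 sp A1p hY1 hY2.
  rewrite sa; lra.
rewrite /Ma gt_max; apply/andP; split.
  apply: (@bdd_div _ (fourier G) (fun p => (p ^+ 2 - a)%:C) (cc ^+ 2 * (2 * A1 G ^+ 2 / a)))
    => [|p].
    apply: mulr_ge0; first exact: ltW.
    by apply: divr_ge0; [apply: mulr_ge0 => //; exact: sqr_ge0 | exact: ltW].
  rewrite sqF sqDM.
  have -> : cc ^+ 2 * (2 * A1 G ^+ 2 / a) * (p ^+ 2 - a) ^+ 2 = cc ^+ 2 * (2 * A1 G ^+ 2 / a * (p ^+ 2 - a) ^+ 2) by ring.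
  apply: ler_wpM2l; first exact: ltW.
  rewrite mulrAC ler_pdivlMr // mulrC; exact: bd.
apply: (@bdd_div _ (fun p => (p ^+ 2)%:C * fourier G p) (fun p => (p ^+ 2 - a)%:C)
   (cc ^+ 2 * (8 * A0 G ^+ 2 + 8 * a * A1 G ^+ 2))) => [|p].
  apply: mulr_ge0; first exact: ltW.
  by apply: addr_ge0; apply: mulr_ge0 => //; rewrite ?sqr_ge0 // mulr_ge0 // ltW.
rewrite sqF2 sqDM.
set Z := Cc G p ^+ 2 + Ss G p ^+ 2.
have -> : (p ^+ 2) ^+ 2 * (cc ^+ 2 * Z) = cc ^+ 2 * ((p ^+ 2) ^+ 2 * Z) by ring.
have -> : cc ^+ 2 * (8 * A0 G ^+ 2 + 8 * a * A1 G ^+ 2) * (p ^+ 2 - a) ^+ 2 = cc ^+ 2 * ((8 * A0 G ^+ 2 + 8 * a * A1 G ^+ 2) * (p ^+ 2 - a) ^+ 2) by ring.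
apply: ler_wpM2l; first exact: ltW.
apply: polyC2 => //; [exact: sqr_ge0 | by apply: addr_ge0; exact: sqr_ge0 | | exact: bd].
have := sq_le (Cc_bd HG p); have := sq_le (Ss_bd HG p); rewrite /Z; lra.
Qed.
End CC3.
Section DD.
Variable R : realType.
Local Notation mu := (@lebesgue_measure R).
Local Notation I f := (Rintegral mu setT f).

Lemma int_x (G : R -> R) : Int G -> Int (fun x => x ^+ 2 * G x) -> Int (fun x => x * G x).
Proof.
move=> HG HG2.
apply: (@int_dom _ (fun x => x * G x) (fun x => `|G x| + `|x ^+ 2 * G x|)).
- apply: measurable_funM => //; exact: int_meas.
- move=> x; rewrite normrM [X in _ <= X]ger0_norm ?addr_ge0 // normrM.
  rewrite (ger0_norm (sqr_ge0 x)).
  have hx : `|x| <= 1 + x ^+ 2.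
    rewrite -(real_normK (num_real x)); have := sqr_ge0 (`|x| - 1); have := normr_ge0 x; nra.
  have := ler_wpM2r (normr_ge0 (G x)) hx; rewrite mulrDl mul1r; lra.
- apply: (@eq_integrable _ _ _ mu setT measurableT
     ((EFin \o (fun x => `|G x|)) \+ (EFin \o (fun x => `|x ^+ 2 * G x|)))).
    by move=> x _ /=; rewrite EFinD.
  by apply: integrableD => //; apply: int_norm.
Qed.

Lemma partD (G : R -> R) : Int G -> Int (fun x => x ^+ 2 * G x) ->
  ((Ma G 0 < +oo)%E <-> (I G = 0 /\ I (fun x => x * G x) = 0)).
Proof.
move=> HG HG2; have HG1 := int_x HG HG2.
have cc2 : 0 < cc ^+ 2 :> R by rewrite exprn_gt0 // cc_gt0.
have A1p := A1_ge0 G; have A0p := A0_ge0 G; have A2p := A2_ge0 G.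
split; last first.
  move=> [IG0 J0]; rewrite /Ma gt_max; apply/andP; split.
    apply: (@bdd_div _ (fourier G) (fun p => (p ^+ 2 - 0)%:C) (2 * cc ^+ 2 * A2 G ^+ 2))
      => [|p].
      by apply: mulr_ge0; [apply: mulr_ge0 => //; exact: ltW | exact: sqr_ge0].
    rewrite sqF sqDM.
    have hX : `|Cc G p| <= p ^+ 2 * A2 G by have := Cc_2 HG HG2 p; rewrite IG0 subr0.
    have hY : `|Ss G p| <= p ^+ 2 * A2 G.
      by have := Ss_2 HG HG1 HG2 p; rewrite J0 mulr0 subr0.
    apply: le_trans (sqF_bd hX hY) _.
    by rewrite subr0 le_eqVlt; apply/orP; left; apply/eqP; ring.
  apply: (@bdd_div _ (fun p => (p ^+ 2)%:C * fourier G p) (fun p => (p ^+ 2 - 0)%:C)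
     (2 * cc ^+ 2 * A0 G ^+ 2)) => [|p]; first exact: cst_ge0.
  rewrite sqF2 sqDM subr0 [X in X <= _]mulrC ler_wpM2r //; first exact: sqr_ge0.
  exact: sqF_bd (Cc_bd HG p) (Ss_bd HG p).
rewrite /Ma gt_max => /andP[H _].
have [IG0|IG0] := eqVneq (I G) 0; last first.
  exfalso; move: H.
  apply: (@unbdd_div2 _ (fourier G) (fun p => (p ^+ 2 - 0)%:C) 0
     (Num.min 1 (`|I G| / (2 * A1 G + 1))) (cc ^+ 2 * (I G) ^+ 2 / 4)).
  - exact: min_gt0.
  - by apply: divr_gt0 => //; apply: mulr_gt0 => //; rewrite exprn_even_gt0.
  move=> t ht; have [t1 tA] := small_t A1p IG0 ht.
  have t0 : 0 < t by case/andP: ht.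
  rewrite add0r sqDM sqF subr0; split; first by rewrite !exprn_gt0.
  have hX : `|Cc G t - I G| <= t * A1 G.
    by have := Cc_lip HG HG1 t 0; rewrite Cc0 subr0 (gtr0_norm t0).
  have lX := lowX hX tA.
  have hS := sqr_ge0 (Ss G t).
  have T1 : t ^+ 2 <= 1 by rewrite -(expr1n _ 2); apply: sq_le; rewrite gtr0_norm // ltW.
  have T0 := sqr_ge0 t.
  set X := Cc G t in lX hS *; set V := I G in lX *; set T := t ^+ 2 in T1 T0 *.
  have K0 : 0 <= cc ^+ 2 * V ^+ 2 / 4 by apply: divr_ge0 => //; apply: mulr_ge0; [exact: ltW|exact: sqr_ge0].
  have h1 : cc ^+ 2 * V ^+ 2 / 4 * T ^+ 2 <= T * (cc ^+ 2 * (V ^+ 2 / 4)).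
    have -> : cc ^+ 2 * V ^+ 2 / 4 * T ^+ 2 = T * ((cc ^+ 2 * (V ^+ 2 / 4)) * T) by ring.
    apply: ler_wpM2l => //.
    rewrite -[X in _ <= X](mulr1 (cc ^+ 2 * (V ^+ 2 / 4))) ler_wpM2l //.
    by rewrite mulrA.
  apply: le_trans h1 _; apply: ler_wpM2l => //; apply: ler_wpM2l; first exact: ltW.
  lra.
split => //; apply/eqP; apply: contraT => J0; exfalso; move: H.
set J := I (fun x => x * G x) in J0 *.
apply: (@unbdd_div2 _ (fourier G) (fun p => (p ^+ 2 - 0)%:C) 0
   (Num.min 1 (`|J| / (2 * A2 G + 1))) (cc ^+ 2 * J ^+ 2 / 4)).
- exact: min_gt0.
- by apply: divr_gt0 => //; apply: mulr_gt0 => //; rewrite exprn_even_gt0.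
move=> t ht; have [t1 tA] := small_t A2p J0 ht.
have t0 : 0 < t by case/andP: ht.
rewrite add0r sqDM sqF subr0; split; first by rewrite !exprn_gt0.
have hY : `|Ss G t - t * J| <= t ^+ 2 * A2 G by exact: Ss_2.
have tA' : 2 * (t ^+ 2 * A2 G) <= `|t * J|.
  rewrite normrM (gtr0_norm t0) expr2 -mulrA mulrCA ler_wpM2l //; exact: ltW.
have lY := lowX hY tA'.
have hC := sqr_ge0 (Cc G t).
apply: le_trans (_ : t ^+ 2 * (cc ^+ 2 * ((t * J) ^+ 2 / 4)) <= _).
  by rewrite le_eqVlt; apply/orP; left; apply/eqP; field.
apply: ler_wpM2l; first exact: sqr_ge0.
apply: ler_wpM2l; first exact: ltW.
lra.
Qed.
End DD.


Unset Implicit Arguments.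
Theorem lemmaA1 (R : realType) (N K l r : nat) (G : nat -> R -> R) (a b : nat -> R) :
  (4 <= N)%N -> (2 <= K)%N -> (1 <= l <= K - 1)%N -> (K + 1 <= r <= N - 1)%N ->
  (forall k, (1 <= k <= N)%N -> L1 (G k)) ->
  (* (a) *)
  (forall k, (1 <= k <= l)%N -> 0 < a k -> b k != 0 ->
     (Nab (G k) (a k) (b k) < +oo)%E) /\
  (* (b) *)
  (forall k, (l + 1 <= k <= K)%N -> a k = 0 -> b k != 0 ->
     L1 (fun x => x * G k x) ->
     ((Nab (G k) 0 (b k) < +oo)%E <->
        Rintegral lebesgue_measure setT (G k) = 0)) /\
  (* (c) *)
  (forall k, (K + 1 <= k <= r)%N -> 0 < a k ->
     L1 (fun x => x * G k x) ->
     ((Ma (G k) (a k) < +oo)%E <->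
        (cint (G k) (Num.sqrt (a k)) = 0 /\ cint (G k) (- Num.sqrt (a k)) = 0))) /\
  (* (d) *)
  (forall k, (r + 1 <= k <= N)%N -> a k = 0 ->
     L1 (fun x => x ^+ 2 * G k x) ->
     ((Ma (G k) 0 < +oo)%E <->
        (Rintegral lebesgue_measure setT (G k) = 0 /\
         Rintegral lebesgue_measure setT (fun x => x * G k x) = 0))).

Proof.
move=> HN HK Hl Hr HL.
have HG : forall k, (1 <= k <= N)%N -> Int (G k) by move=> k hk; exact: HL.
split; [|split; [|split]].
- move=> k hk a0 b0; apply: partA => //; apply: HG.
  move: hk Hl Hr => /andP[h1 h2] /andP[h3 h4] /andP[h5 h6]; apply/andP; split; lia.
- move=> k hk _ b0 H1; apply: partB => //; apply: HG.
  move: hk Hl Hr => /andP[h1 h2] /andP[h3 h4] /andP[h5 h6]; apply/andP; split; lia.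
- move=> k hk a0 H1; apply: partC => //; apply: HG.
  move: hk Hl Hr => /andP[h1 h2] /andP[h3 h4] /andP[h5 h6]; apply/andP; split; lia.
- move=> k hk _ H2; apply: partD => //; apply: HG.
  move: hk Hl Hr => /andP[h1 h2] /andP[h3 h4] /andP[h5 h6]; apply/andP; split; lia.
Qed.
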